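(* Let $X$ be a bounded subset of $\mathbb R^n$. For every $\epsilon>0$ there exists $\delta>0$ such that for every continuous path $\alpha:[0,1]\to X$ with $\mathcal T(\alpha)<\delta$ we have $\operatorname{diam}(\operatorname{Im}(\alpha))\le\epsilon$.
   Context: Let $g:\mathbb R^n\to[-1,1]$ depend only on the first coordinate $x_1$: $g=-1$ if $x_1\le-3$, $\frac12(x_1+1)$ if $-3\le x_1\le-1$, $0$ if $-1\le x_1\le1$, $\frac12(x_1-1)$ if $1\le x_1\le3$, $1$ if $x_1\ge3$. For a pair $(P,Q)$ of distinct parallel hyperplanes let $g_{(P,Q)}=g\circ h_{(P,Q)}$ where $h_{(P,Q)}$ is a composition of a dilation, rotation and translation sending $P$ to $\{x_1=-3\}$ and $Q$ to $\{x_1=3\}$. For continuous $f:[a,b]\to\mathbb R^n$, $o(f,(P,Q))$ is the supremum of $-\sum_{i=1}^k g_{(P,Q)}(f(a_{i-1}))g_{(P,Q)}(f(a_i))$ over finite $a\le a_0\le\dots\le a_k\le b$ (empty sums $=0$). Fixing a countable dense set $\{(P_i,Q_i)\}$ in the separable metric space of pairs of parallel hyperplanes, the total oscillation is $\mathcal T(\alpha)=\sum_{i\ge1}2^{-i}\frac{o(\alpha,(P_i,Q_i))}{1+o(\alpha,(P_i,Q_i))}$. *)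

(* Defs.v *)
From HB Require Import structures.
From mathcomp Require Import all_boot all_order all_algebra.
From mathcomp Require Import all_classical all_reals all_analysis.
Set Implicit Arguments. Unset Strict Implicit. Unset Printing Implicit Defensive.
Import Order.TTheory GRing.Theory Num.Theory.
Import numFieldNormedType.Exports.
Local Open Scope ring_scope.
Local Open Scope classical_set_scope.

Section Defs.
Variables (R : realType) (n : nat).
Notation vec := 'rV[R]_n.

Definition dotv (u x : vec) : R := \sum_(i < n) u 0 i * x 0 i.
Definition enorm (x : vec) : R := Num.sqrt (dotv x x).

(* The function g, depending only on the first coordinate t = x_1. *)
Definition g1 (t : R) : R :=
  if t <= -3 then -1
  else if t <= -1 then (t + 1) / 2
  else if t <= 1 then 0
  else if t <= 3 then (t - 1) / 2
  else 1.

(* A pair (P,Q) of distinct parallel hyperplanes is represented by (u,a,b):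
   P = {x | <u,x> = a}, Q = {x | <u,x> = b}, |u| = 1, a <> b.
   (u,a,b) and (-u,-a,-b) represent the same ordered pair. *)
Definition hpair := (vec * R * R)%type.
Definition valid_pair (p : hpair) : Prop :=
  enorm p.1.1 = 1 /\ p.1.2 <> p.2.

(* g_(P,Q) = g o h_(P,Q): the first coordinate of any similarity h sending
   P to {x_1=-3} and Q to {x_1=3} is -3 + 6(<u,x>-a)/(b-a). *)
Definition gPQ (p : hpair) (x : vec) : R :=
  g1 (-3 + 6 * (dotv p.1.1 x - p.1.2) / (p.2 - p.1.2)).

Definition osc_sum (p : hpair) (f : R -> vec) (s : seq R) : R :=
  - \sum_(i < (size s).-1) gPQ p (f (nth 0 s i)) * gPQ p (f (nth 0 s i.+1)).

Definition osc (a b : R) (f : R -> vec) (p : hpair) : \bar R :=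
  ereal_sup [set (osc_sum p f s)%:E | s in
     [set s : seq R | sorted <=%R s /\ all (fun t => (a <= t) && (t <= b)) s]].

Definition osc_ratio (o : \bar R) : R :=
  if o == +oo%E then 1 else fine o / (1 + fine o).

(* Total oscillation; the dense family is indexed from 0, so the weight of
   the i-th member (paper's index i+1) is 2^-(i+1). *)
Definition total_osc (H : nat -> hpair) (a b : R) (f : R -> vec) : \bar R :=
  (\sum_(0 <= i <oo) ((2%:R ^- i.+1) * osc_ratio (osc a b f (H i)))%:E)%E.

(* Density of a family of pairs in the space of pairs of parallel
   hyperplanes (topology of convergence of the pair, up to the sign of the
   representation). *)
Definition dense_pairs (H : nat -> hpair) : Prop :=
  forall p : hpair, valid_pair p -> forall e : R, 0 < e ->
    exists i : nat, exists sg : bool,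
      let c : R := (-1) ^+ sg in
      enorm (p.1.1 - c *: (H i).1.1) < e /\
      `|p.1.2 - c * (H i).1.2| < e /\ `|p.2 - c * (H i).2| < e.

End Defs.

(* Main.v *)
Require Import Defs.
From HB Require Import structures.
From mathcomp Require Import all_boot all_order all_algebra.
From mathcomp Require Import all_classical all_reals all_analysis.
From mathcomp Require Import ring lra.
Import Order.TTheory GRing.Theory Num.Theory.
Import numFieldNormedType.Exports.
Local Open Scope ring_scope.
Local Open Scope classical_set_scope.
Set Implicit Arguments. Unset Strict Implicit. Unset Printing Implicit Defensive.

Section H.
Variables (R : realType) (n : nat).
Notation vec := 'rV[R]_n.

Lemma coord_le_norm (x : vec) i : `|x 0 i| <= `|x|.
Proof.
have := le_bigmax 0 (fun ij : 'I_1 * 'I_n => `|x ij.1 ij.2|) (0, i).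
by rewrite -mx_normrE.
Qed.

Lemma coord_le_enorm (v : vec) j : `|v 0 j| <= enorm v.
Proof.
rewrite /enorm -sqrtr_sqr; apply: ler_wsqrtr.
rewrite /dotv (bigD1 j) //= expr2 lerDl; apply: sumr_ge0 => i _.
by rewrite -expr2 sqr_ge0.
Qed.

Lemma enorm_le (v : vec) (d : R) : 0 <= d -> (forall j, `|v 0 j| <= d) ->
  enorm v <= n%:R * d.
Proof.
move=> d0 hv; rewrite /enorm.
have -> : n%:R * d = Num.sqrt ((n%:R * d) ^+ 2).
  by rewrite sqrtr_sqr ger0_norm // mulr_ge0.
apply: ler_wsqrtr.
apply: (@le_trans _ _ (\sum_(i < n) d ^+ 2)).
  apply: ler_sum => i _; rewrite -expr2 -real_normK ?num_real //.
  by rewrite lerXn2r // ?nnegrE.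
rewrite sumr_const card_ord -[d ^+ 2 *+ n]mulr_natl exprMn.
apply: ler_wpM2r; first exact: sqr_ge0.
case: n => [|m]; first by rewrite expr0n.
by rewrite expr2 ler_peMl // ler1n.
Qed.

Lemma dotv_scale c (u x : vec) : dotv (c *: u) x = c * dotv u x.
Proof. by rewrite /dotv mulr_sumr; apply: eq_bigr => i _; rewrite mxE mulrA. Qed.

Lemma dotvB (u v x : vec) : dotv (u - v) x = dotv u x - dotv v x.
Proof. by rewrite /dotv -sumrB; apply: eq_bigr => i _; rewrite !mxE mulrBl. Qed.

Lemma dotv_delta (j : 'I_n) (x : vec) : dotv (delta_mx 0 j : vec) x = x 0 j.
Proof.
rewrite /dotv (bigD1 j) //= big1 ?addr0; first by rewrite mxE !eqxx mul1r.
by move=> i /negbTE hij; rewrite mxE hij andbF mul0r.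
Qed.

Lemma enorm_delta (j : 'I_n) : enorm (delta_mx 0 j : vec) = 1.
Proof. by rewrite /enorm dotv_delta mxE !eqxx sqrtr1. Qed.

Lemma dotv_approx (j : 'I_n) (U x : vec) e M :
  enorm ((delta_mx 0 j : vec) - U) < e -> (forall i, `|x 0 i| <= M) ->
  `|dotv U x - x 0 j| <= n%:R * e * M.
Proof.
move=> hU hx.
rewrite -dotv_delta -dotvB /dotv.
apply: (le_trans (ler_norm_sum _ _ _)).
apply: (@le_trans _ _ (\sum_(i < n) e * M)).
  apply: ler_sum => i _; rewrite normrM; apply: ler_pM => //.
  rewrite -[U - _]opprB mxE normrN.
  exact: (le_trans (coord_le_enorm _ i) (ltW hU)).
by rewrite sumr_const card_ord -[e * M *+ n]mulr_natl mulrA.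
Qed.


Lemma g1_lo (t : R) : t <= -3 -> g1 t = -1.
Proof. by move=> h; rewrite /g1 h. Qed.

Lemma g1_hi (t : R) : 3 <= t -> g1 t = 1.
Proof.
move=> h; rewrite /g1.
have -> : (t <= -3) = false by apply/negbTE; rewrite -ltNge; lra.
have -> : (t <= -1) = false by apply/negbTE; rewrite -ltNge; lra.
have -> : (t <= 1) = false by apply/negbTE; rewrite -ltNge; lra.
case: ifP => // h3; have -> : t = 3 by lra.
lra.
Qed.

Lemma gPQ_sign (p : hpair R n) (sg : bool) (x : vec) :
  gPQ p x = g1 (-3 + 6 * (dotv (((-1) ^+ sg) *: p.1.1) x - (-1) ^+ sg * p.1.2)
                 / ((-1) ^+ sg * p.2 - (-1) ^+ sg * p.1.2)).
Proof.
rewrite /gPQ dotv_scale; case: sg => /=; last by rewrite expr0 !mul1r.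
by rewrite expr1 !mulN1r -opprD -opprD mulrN invrN mulrNN.
Qed.

Lemma g_lo (U x : vec) (A B : R) : A < B -> dotv U x <= A ->
  g1 (-3 + 6 * (dotv U x - A) / (B - A)) = -1.
Proof.
move=> hAB hx; apply: g1_lo.
have : 0 < (B - A)^-1 by rewrite invr_gt0 subr_gt0.
set q := (B - A)^-1 => hq.
have : dotv U x - A <= 0 by lra.
nra.
Qed.

Lemma g_hi (U x : vec) (A B : R) : A < B -> B <= dotv U x ->
  g1 (-3 + 6 * (dotv U x - A) / (B - A)) = 1.
Proof.
move=> hAB hx; apply: g1_hi.
have hq : (B - A) / (B - A) = 1 by rewrite divff // subr_eq0 gt_eqF.
have : 0 < (B - A)^-1 by rewrite invr_gt0 subr_gt0.
have : (B - A) <= dotv U x - A by lra.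
set q := (B - A)^-1; move: hq; rewrite -/q => hq h1 h2.
have : (B - A) * q <= (dotv U x - A) * q by rewrite ler_pM2r.
rewrite -mulrA; nra.
Qed.

End H.

Lemma fin_bound (T : finType) (Q : T -> nat -> Prop) :
  (forall t, exists N, Q t N) ->
  (forall t N N', (N <= N')%N -> Q t N -> Q t N') ->
  exists N, forall t, Q t N.
Proof.
move=> hex hmono; have [f hf] := choice hex.
exists (\max_t f t) => t; apply: hmono (hf t); exact: leq_bigmax.
Qed.

Section O.
Variables (R : realType) (n : nat).
Notation vec := 'rV[R]_n.

Lemma osc_ge0 a b (f : R -> vec) p : (0 <= osc a b f p)%E.
Proof.
apply: ereal_sup_ubound; exists [::] => //=.
by rewrite /osc_sum big_ord0 oppr0.
Qed.

Lemma osc_ge1 (f : R -> vec) p s t : 0 <= s <= 1 -> 0 <= t <= 1 ->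
  gPQ p (f s) * gPQ p (f t) = -1 -> (1 <= osc 0 1 f p)%E.
Proof.
move=> hs ht hg.
case: (leP s t) => hst.
  apply: ereal_sup_ubound; exists [:: s; t].
    by split; rewrite /= ?hst ?hs ?ht.
  by rewrite /osc_sum /= big_ord1 /= hg opprK.
apply: ereal_sup_ubound; exists [:: t; s].
  by split; rewrite /= ?(ltW hst) ?hs ?ht.
by rewrite /osc_sum /= big_ord1 /= mulrC hg opprK.
Qed.

Lemma ratio_ge0 (o : \bar R) : (0 <= o)%E -> 0 <= osc_ratio o.
Proof.
rewrite /osc_ratio; case: o => [r| |] //= h.
rewrite lee_fin in h; rewrite divr_ge0 //; lra.
Qed.

Lemma ratio_ge_half (o : \bar R) : (1 <= o)%E -> 1 / 2 <= osc_ratio o.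
Proof.
rewrite /osc_ratio; case: o => [r| |] //= h.
  rewrite lee_fin in h.
  rewrite ler_pdivlMr; last lra.
  rewrite mulrAC ler_pdivrMr; lra.
lra.
Qed.

Lemma total_ge (H : nat -> hpair R n) a b (f : R -> vec) i :
  ((2%:R ^- i.+1 * osc_ratio (osc a b f (H i)))%:E <= total_osc H a b f)%E.
Proof.
have h0 : forall k, (0 <= (2%:R ^- k.+1 * osc_ratio (osc a b f (H k)))%:E)%E.
  move=> k; rewrite lee_fin mulr_ge0 //; last exact/ratio_ge0/osc_ge0.
apply: le_trans (nneseries_lim_ge i.+1 (fun k _ _ => h0 k)).
rewrite big_nat_recr //=; apply: leeDr; exact: sume_ge0.
Qed.

End O.

Theorem lemma3p15 (R : realType) (n : nat) (H : nat -> hpair R n)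
  (Hvalid : forall i, valid_pair (H i)) (Hdense : dense_pairs H)
  (X : set 'rV[R]_n) (HX : bounded_set X) :
  forall eps : R, 0 < eps -> exists2 delta : R, 0 < delta &
    forall alpha : R -> 'rV[R]_n,
      {within `[0%R, 1%R], continuous alpha} ->
      (forall t, 0 <= t <= 1 -> X (alpha t)) ->
      (total_osc H 0 1 alpha < delta%:E)%E ->
      forall s t, 0 <= s <= 1 -> 0 <= t <= 1 ->
        enorm (alpha s - alpha t) <= eps.
Proof.
move=> eps eps0.
have [n0|nn0] := eqVneq n 0%N.
  exists 1 => // alpha _ _ _ s t _ _; subst n.
  by rewrite /enorm /dotv big_ord0 sqrtr0 ltW.
have npos : (0 < n%:R :> R) by rewrite ltr0n lt0n.
case: HX => M0 [M0r HM0].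
pose M : R := `|M0| + 1.
have M0M : M0 < M by rewrite /M; have := ler_norm M0; lra.
have Mge0 : 0 <= M by rewrite /M; have := normr_ge0 M0; lra.
have hM : forall x, X x -> forall i, `|x 0 i| <= M.
  move=> x Xx i; have := HM0 M M0M x Xx. have := coord_le_norm x i. exact: le_trans.
pose d : R := eps / n%:R.
have d0 : 0 < d by rewrite /d divr_gt0.
pose w : R := d / 4.
have w0 : 0 < w by rewrite /w divr_gt0.
pose e : R := w / (4 * (n%:R * M + 1)).
have e0 : 0 < e by rewrite /e divr_gt0 //; nra.
have hE : n%:R * e * M + e = w / 4.
  rewrite /e; field; apply: lt0r_neq0; nra.
pose K := (Num.trunc (2 * M / w)).+3.
pose target (j : 'I_n) (k : nat) : hpair R n :=
  (delta_mx 0 j, -M + k%:R * w, -M + k%:R * w + w).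
have tvalid : forall j k, valid_pair (target j k).
  move=> j k; split; first exact: enorm_delta.
  by move=> /= h; lra.
pose good (j : 'I_n) (k : nat) (i : nat) := exists sg : bool,
  enorm ((target j k).1.1 - ((-1) ^+ sg) *: (H i).1.1) < e /\
  `|(target j k).1.2 - (-1) ^+ sg * (H i).1.2| < e /\
  `|(target j k).2 - (-1) ^+ sg * (H i).2| < e.
have [N hN] : exists N, forall (j : 'I_n) (k : 'I_K),
    exists2 i, (i <= N)%N & good j k i.
  apply: (fin_bound (Q := fun j N => forall k : 'I_K,
     exists2 i, (i <= N)%N & good j k i)).
  - move=> j; idtac; apply: (fin_bound (T := 'I_K) (Q := fun k N => exists2 i, (i <= N)%N & good j k i)).
    + move=> k; have [i [sg hi]] := Hdense (target j k) (tvalid j k) e e0.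
      by exists i, i => //; exists sg.
    + by move=> k N N' hNN [i hi hg]; exists i => //; exact: leq_trans hNN.
  - by move=> j N N' hNN hQ k; have [i hi hg] := hQ k; exists i => //;
      exact: leq_trans hi hNN.
have core : forall x y, X x -> X y -> forall j : 'I_n, 4 * w < y 0 j - x 0 j ->
    exists i, (i <= N)%N /\ gPQ (H i) x = -1 /\ gPQ (H i) y = 1.
  move=> x y Xx Xy j hxy.
  have hxM := hM x Xx j; have hyM := hM y Xy j.
  have xM0 : 0 <= (x 0 j + M) / w.
    by rewrite divr_ge0 ?(ltW w0) //; move: hxM; rewrite ler_norml; lra.
  pose t := Num.trunc ((x 0 j + M) / w).
  have /andP [ht1 ht2] := truncn_itv xM0.
  rewrite -/t in ht1 ht2.
  have hk : (t.+2 < K)%N.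
    rewrite /K ltnS ltnS -(ltr_nat R).
    apply: le_lt_trans (truncnS_gt _).
    apply: le_trans ht1 _; rewrite ler_pM2r ?invr_gt0 //.
    by move: hxM; rewrite ler_norml; lra.
  have [i hiN [sg [h1 [h2 h3]]]] := hN j (Ordinal hk).
  exists i; split => //.
  rewrite !(gPQ_sign _ sg).
  move: h1 h2 h3; rewrite /=.
  set c := (-1) ^+ sg.
  set U := c *: (H i).1.1; set A := c * (H i).1.2; set B := c * (H i).2.
  move=> h1 h2 h3.
  have hx := dotv_approx h1 (hM x Xx).
  have hy := dotv_approx h1 (hM y Xy).
  have tw1 : t%:R * w <= x 0 j + M by move: ht1; rewrite ler_pdivlMr.
  have tw2 : x 0 j + M < t%:R * w + w.
    by move: ht2; rewrite ltr_pdivrMr // -[t.+1]addn1 natrD mulrDl mul1r.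
  have hkw : t.+2%:R * w = t%:R * w + 2 * w.
    by rewrite -[t.+2]addn2 natrD mulrDl.
  rewrite hkw in h2 h3.
  move: hx hy h2 h3; rewrite !ltr_norml !ler_norml => /andP[hx1 hx2]
    /andP[hy1 hy2] /andP[h21 h22] /andP[h31 h32].
  split; [apply: g_lo | apply: g_hi]; lra.
exists ((2%:R ^- N.+1) / 2).
  by rewrite divr_gt0 // invr_gt0 exprn_gt0.
move=> alpha _ hX hT s t hs ht.
rewrite leNgt; apply/negP => hgt.
pose v := alpha s - alpha t.
have [j hj] : exists j, d < `|v 0 j|.
  case: (pickP (fun j => d < `|v 0 j|)) => [j hj|hnone]; first by exists j.
  exfalso; move: hgt; apply/negP; rewrite -leNgt.
  have -> : eps = n%:R * d by rewrite /d [n%:R * _]mulrC divfK //; exact: lt0r_neq0.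
  apply: enorm_le; first exact: ltW.
  by move=> j; rewrite leNgt hnone.
have hvj : v 0 j = alpha s 0 j - alpha t 0 j by rewrite /v !mxE.
have [i [hiN hprod]] : exists i, (i <= N)%N /\
    gPQ (H i) (alpha s) * gPQ (H i) (alpha t) = -1.
  move: hj; rewrite hvj ltr_normr => /orP[] hj.
    have hw : 4 * w < alpha s 0 j - alpha t 0 j by rewrite /w; lra.
    have [i [hi [g1 g2]]] := core _ _ (hX t ht) (hX s hs) j hw.
    by exists i; rewrite g1 g2 mul1r.
  have hw : 4 * w < alpha t 0 j - alpha s 0 j by rewrite /w; lra.
  have [i [hi [g1 g2]]] := core _ _ (hX s hs) (hX t ht) j hw.
  by exists i; rewrite g1 g2 mulr1.
have ho := osc_ge1 hs ht hprod.
have hr := ratio_ge_half ho.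
have hT' := total_ge H 0 1 alpha i.
have hpow : 2%:R ^- N.+1 <= 2%:R ^- i.+1 :> R.
  rewrite -!exprVn; apply: ler_wiXn2l => //.
  lra.
have : ((2%:R ^- N.+1 / 2)%:E <= total_osc H 0 1 alpha)%E.
  apply: le_trans hT'; rewrite lee_fin.
  rewrite div1r in hr.
  apply: ler_pM hpow hr; first by rewrite invr_ge0 exprn_ge0.
  by rewrite invr_ge0.
by rewrite leNgt hT.
Qed.
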